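(* Let $G$ be a graph and let $0<d<1<u$ be parameters. Assume that the minimum degree satisfies $\delta(G[S])\le d(|S|-1)$ for every vertex subset $S\subseteq V(G)$ with $|S|\ge u$. Then for every vertex subset $W\subseteq V(G)$ with $|W|\ge u$, $$\alpha(G[W])\ge-\log_{(1-d)(1-1/u)}\big(|W|/u\big).$$
   Context: For a graph $H$, $\delta(H)$ denotes its minimum degree and $\alpha(H)$ the size of a largest independent set; $G[S]$ denotes the subgraph of $G$ induced by $S$. *)

(* Defs.v *)
(* finite simple graphs as symmetric irreflexive relations on a
   finType; reals via MathComp-Analysis (R : realType, natural log ln). *)
From mathcomp Require Import all_boot all_order all_algebra.
From mathcomp Require Import all_classical all_reals all_analysis.
Set Implicit Arguments. Unset Strict Implicit. Unset Printing Implicit Defensive.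

Section Graph.
Variable T : finType.
Variable e : rel T.

Definition nbr_in (S : {set T}) (v : T) : {set T} := [set w in S | e v w].

(* minimum degree of the induced subgraph G[S]
   (for S empty this returns #|T|; irrelevant below since |S| >= u > 1) *)
Definition mindeg (S : {set T}) : nat :=
  \big[minn/#|T|]_(v in S) #|nbr_in S v|.

Definition independent (I : {set T}) : bool :=
  [forall x in I, forall y in I, ~~ e x y].

Definition alpha (W : {set T}) : nat :=
  \max_(I in powerset W | independent I) #|I|.
End Graph.

(* Main.v *)
Require Import Defs.
From mathcomp Require Import all_boot all_order all_algebra.
From mathcomp Require Import all_classical all_reals all_analysis.
From mathcomp Require Import ring lra zify.
Import fintype finset.
Import Order.TTheory GRing.Theory Num.Theory.
Local Open Scope ring_scope.

Lemma mindeg_wit (T : finType) (e : rel T) (S : {set T}) v0 : v0 \in S ->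
  exists2 v, v \in S & (#|nbr_in e S v| <= mindeg e S)%N.
Proof.
move=> v0S; rewrite /mindeg.
apply: (big_ind (fun x => exists2 v, v \in S & (#|nbr_in e S v| <= x)%N)).
- by exists v0 => //; exact: max_card.
- move=> x y [v1 h1 l1] [v2 h2 l2].
  case: (leqP x y) => hxy.
  + by exists v1 => //; rewrite (minn_idPl hxy).
  + by exists v2 => //; rewrite (minn_idPr (ltnW hxy)).
- by move=> i iS; exists i.
Qed.

Lemma alpha_step (T : finType) (e : rel T) (W : {set T}) v :
  symmetric e -> irreflexive e -> v \in W ->
  ((alpha e [set w in W | (w != v) && ~~ e v w]).+1 <= alpha e W)%N.
Proof.
move=> sym irr vW.
set W' := [set w in W | _].
have [I /andP [IW' indI] ->] : exists2 I, (I \in powerset W') && independent e I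
   & alpha e W' = #|I|.
  have h : (0 < #|[pred I | (I \in powerset W') && independent e I]|)%N.
    apply/card_gt0P; exists (@finset.set0 T); rewrite inE /= powersetE (@finset.sub0set T W') /=.
    by apply/forallP => x; rewrite inE.
  have [I HI Heq] := @eq_bigmax_cond _ [pred I : {set T} | (I \in powerset W') && independent e I] (fun I => #|I|) h.
  by exists I => //; rewrite /alpha -Heq.
rewrite powersetE in IW'.
have vI : v \notin I.
  apply/negP => /(subsetP IW'); by rewrite inE eqxx andbF.
have -> : (#|I|.+1 = #|v |: I|)%N by rewrite cardsU1 vI.
rewrite /alpha; apply: (@leq_bigmax_cond _ [pred J : {set T} | (J \in powerset W) && independent e J] (fun J => #|J|)).
rewrite /= powersetE; apply/andP; split.
  apply/subsetP => x; rewrite in_setU1 => /orP [/eqP -> //|] /(subsetP IW').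
  by rewrite inE => /andP [].
apply/forallP => x; apply/implyP; rewrite in_setU1 => hx.
apply/forallP => y; apply/implyP; rewrite in_setU1 => hy.
have nv : forall z, z \in I -> ~~ e v z.
  by move=> z /(subsetP IW'); rewrite inE => /andP [_ /andP []].
case/orP: hx => [/eqP ->|xI]; case/orP: hy => [/eqP ->|yI].
- by rewrite irr.
- exact: nv.
- by rewrite sym; exact: nv.
- by move/forallP/(_ x): indI; rewrite xI /= => /forallP/(_ y); rewrite yI.
Qed.

Lemma card_Wp (T : finType) (e : rel T) (W : {set T}) v :
  v \in W ->
  (#|W| <= #|[set w in W | (w != v) && ~~ e v w]| + (#|nbr_in e W v|).+1)%N.
Proof.
move=> vW.
set W' := [set w in W | _].
rewrite -(cardsID W' W).
have -> : W :&: W' = W' by apply/setP => x; rewrite !inE; case: (x \in W).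
rewrite leq_add2l.
have H : W :\: W' \subset v |: nbr_in e W v.
  apply/subsetP => x; rewrite !inE => /andP [hx xW]; rewrite xW /= in hx.
  rewrite xW /=; move: hx; rewrite negb_and negbK; by case: (x == v) => //= /negPn.
apply: leq_trans (subset_leq_card H) _.
by rewrite cardsU1; case: (v \in _).
Qed.

Lemma aux_ineq (R : realFieldType) (d N N' D u : R) : 0 < u -> 0 < d -> d < 1 ->
  1 <= N / u -> D <= d * (N - 1) -> N <= N' + D + 1 ->
  (1 - d) * (1 - u^-1) * N <= N'.
Proof.
move=> u0 d0 d1 Nu hD hN.
have e1 : (1 - d) * (1 - u^-1) * N = (1 - d) * (N - 1) - (1 - d) * (N / u - 1).
  by field; rewrite gt_eqF.
have e2 : 0 <= (1 - d) * (N / u - 1) by apply: mulr_ge0; rewrite subr_ge0 // ltW.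
rewrite e1.
have e3 : (1 - d) * (N - 1) = N - 1 - d * (N - 1) by ring.
rewrite e3.
lra.
Qed.

Lemma key (R : realType) (T : finType) (e : rel T) (d u : R) :
  symmetric e -> irreflexive e ->
  0 < d -> d < 1 -> 1 < u ->
  (forall S : {set T}, u <= (#|S|)%:R ->
     ((mindeg e S)%:R : R) <= d * ((#|S|)%:R - 1)) ->
  forall n (W : {set T}), (#|W| <= n)%N ->
    (#|W|)%:R * ((1 - d) * (1 - u^-1)) ^+ alpha e W <= u.
Proof.
move=> sym irr d0 d1 u1 hS.
set q := (1 - d) * (1 - u^-1).
have u0 : 0 < u by lra.
have ui : u^-1 <= 1 by rewrite invf_le1 //; lra.
have ui0 : 0 <= u^-1 by rewrite invr_ge0; lra.
have q0 : 0 <= q by rewrite /q mulr_ge0 //; lra.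
have q1 : q <= 1 by rewrite /q; nra.
elim=> [|n IH] W hW.
  have -> : #|W| = 0%N by move: hW; rewrite leqn0 => /eqP.
  by rewrite mul0r; lra.
case: (lerP u (#|W|)%:R) => huW; last first.
  apply: le_trans (ltW huW); rewrite -[X in _ <= X]mulr1 ler_wpM2l //.
  exact: exprn_ile1.
have [v0 v0W] : exists v0, v0 \in W.
  apply/card_gt0P; rewrite -(ltr_nat R); apply: lt_le_trans huW; lra.
have [v vW dv] := @mindeg_wit T e W v0 v0W.
set W' := [set w in W | (w != v) && ~~ e v w].
have pr : W' \proper W.
  apply/properP; split.
    by apply/subsetP => x; rewrite inE => /andP [].
  by exists v => //; rewrite inE eqxx andbF.
have hW' : (#|W'| <= n)%N.
  by have := proper_card pr; move: hW; clear; lia.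
have IHW := IH W' hW'.
have cW := @card_Wp T e W v vW.
have al := @alpha_step T e W v sym irr vW.
have hd := hS W huW.
set N := (#|W|)%:R in huW hd IHW cW *.
set N' := (#|W'|)%:R : R.
have dvR : ((#|nbr_in e W v|)%:R : R) <= d * (N - 1).
  by apply: le_trans hd; rewrite ler_nat.
have cWR : N <= N' + (#|nbr_in e W v|)%:R + 1.
  by move: cW; rewrite -(ler_nat R) natrD -addn1 natrD addrA.
have Nu : 1 <= N / u by rewrite ler_pdivlMr // mul1r.
have qN : q * N <= N' by have := @aux_ineq R _ _ _ _ _ u0 d0 d1 Nu dvR cWR.
apply: le_trans IHW.
apply: le_trans (_ : N * q ^+ (alpha e W').+1 <= _).
  by rewrite ler_wpM2l ?ler0n //; apply: ler_wiXn2l => //; rewrite q0 q1.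
rewrite exprS mulrA [N * q]mulrC ler_wpM2r //; exact: exprn_ge0.
Qed.

Lemma aux_q (R : realFieldType) (d u : R) : 0 < d -> d < 1 -> 1 < u ->
  0 < (1 - d) * (1 - u^-1) < 1.
Proof.
move=> d0 d1 u1.
have u0 : 0 < u by lra.
have ui : u^-1 < 1 by rewrite invf_lt1.
have ui0 : 0 < u^-1 by rewrite invr_gt0.
apply/andP; split; nra.
Qed.

Lemma aux_fin (R : realFieldType) (lN lu L a : R) : L < 0 ->
  lN + a * L <= lu -> - ((lN - lu) / L) <= a.
Proof.
move=> L0 h.
have -> : - ((lN - lu) / L) = (lN - lu) / (- L) by rewrite invrN mulrN.
rewrite ler_pdivrMr; last by rewrite oppr_gt0.
rewrite mulrN; lra.
Qed.

Theorem lemma6 (R : realType) (T : finType) (e : rel T) (d u : R) :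
  symmetric e -> irreflexive e ->
  0 < d -> d < 1 -> 1 < u ->
  (forall S : {set T}, u <= (#|S|)%:R ->
     ((mindeg e S)%:R : R) <= d * ((#|S|)%:R - 1)) ->
  forall W : {set T}, u <= (#|W|)%:R ->
    - (ln ((#|W|)%:R / u) / ln ((1 - d) * (1 - u^-1))) <= ((alpha e W)%:R : R).
Proof.
move=> sym irr d0 d1 u1 hS W huW.
have K := @key R T e d u sym irr d0 d1 u1 hS #|W| W (leqnn _).
have /andP [q0 q1] := @aux_q R _ _ d0 d1 u1.
move: K q0 q1 huW.
set q := (1 - d) * (1 - u^-1).
set N := (#|W|)%:R.
set a := alpha e W.
move=> K q0 q1 huW.
have u0 : 0 < u by apply: lt_trans u1.
have N0 : 0 < N by apply: lt_le_trans huW.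
have L0 : ln q < 0 by apply: ln_lt0; rewrite q0 q1.
have qa0 : 0 < q ^+ a by exact: exprn_gt0.
have hl : ln (N * q ^+ a) <= ln u.
  by rewrite ler_ln // posrE // mulr_gt0.
rewrite lnM ?posrE // lnXn // -mulr_natl in hl.
rewrite ln_div ?posrE //.
exact: (@aux_fin R).
Qed.
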